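(* Let $\Sigma$ be a finite alphabet, $S\in\Sigma^m$, and $a,a'\in\Sigma^m$ with $\mathrm{rep}_{\mathrm{Foc}(S)}(a)=\mathrm{rep}_{\mathrm{Foc}(S)}(a')$. Then $f^S_{\mathrm{BOM}}(a)=f^S_{\mathrm{BOM}}(a')$ and $g^S_{\mathrm{BOM}}(a)=g^S_{\mathrm{BOM}}(a')$.
   Context: For $S=s_0\cdots s_{m-1}$ let $p=p_1\cdots p_m=S^{\mathrm{rev}}$. The factor oracle of $p$ is the deterministic automaton with states $0,\dots,m$, start state $0$, built as follows: set $\mathrm{sl}(0)=-1$; for $i=1,\dots,m$: add transition $i-1\xrightarrow{p_i} i$; let $k=\mathrm{sl}(i-1)$; while $k\ne-1$ and $k$ has no transition labelled $p_i$, add $k\xrightarrow{p_i} i$ and set $k=\mathrm{sl}(k)$; then $\mathrm{sl}(i)=-1$ if $k=-1$, else the target of $k$'s transition labelled $p_i$. Missing transitions lead to a sink FAIL. $\mathrm{Foc}(S)$ is the set of $x\in\Sigma^*$ such that the factor oracle is not in FAIL after reading $x^{\mathrm{rev}}$, and $\mathrm{rep}_{\mathrm{Foc}(S)}(a)$ is the longest suffix of $a$ (including $\varepsilon$) in $\mathrm{Foc}(S)$. For a window $w=w_0\cdots w_{m-1}$, the oracle reads $w_{m-1},w_{m-2},\dots$; let $k^S_w$ be the number of transitions made before entering FAIL (excluding the transition into FAIL). Cost: $f^S_{\mathrm{BOM}}(w)=m$ if $w=S$, else $k^S_w+1$. Shift: $g^S_{\mathrm{BOM}}(w)=1$ if $w=S$,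 else $m-k^S_w$. *)

(* Defs.v *)
From mathcomp Require Import all_boot.
Set Implicit Arguments. Unset Strict Implicit. Unset Printing Implicit Defensive.

Section FactorOracle.
Variable T : finType.

(* A transition (source, letter, target). *)
Definition trans := (nat * T * nat)%type.

(* Transition function of a (deterministic) transition list; None = FAIL. *)
Definition delta (tr : seq trans) (k : nat) (c : T) : option nat :=
  ohead [seq t.2 | t <- tr & (t.1.1 == k) && (t.1.2 == c)].

(* Suffix links: None encodes -1. *)
(* The while loop of the construction, step i with letter c:
   while k <> -1 and k has no c-transition, add k -c-> i and k := sl(k);
   returns the new transitions and sl(i), where sl(i) = 0 when the loop
   reaches k = -1 (standard factor oracle).
   Fuel i suffices since sl(k) < k. *)
Fixpoint climb (fuel : nat) (tr : seq trans) (sl : nat -> option nat)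
    (k : option nat) (c : T) (i : nat) : seq trans * option nat :=
  match fuel with
  | 0 => (tr, None)
  | fuel'.+1 =>
    match k with
    | None => (tr, Some 0)
    | Some k0 =>
      match delta tr k0 c with
      | Some t => (tr, Some t)
      | None => climb fuel' ((k0, c, i) :: tr) sl (sl k0) c i
      end
    end
  end.

(* Process letters p_{i+1}, p_{i+2}, ... (ps), i being the current last state. *)
Fixpoint build (ps : seq T) (i : nat) (tr : seq trans) (sl : nat -> option nat)
    : seq trans * (nat -> option nat) :=
  match ps with
  | [::] => (tr, sl)
  | c :: ps' =>
    let tr1 := (i, c, i.+1) :: tr in
    let res := climb i.+1 tr1 sl (sl i) c i.+1 in
    build ps' i.+1 res.1 (fun j => if j == i.+1 then res.2 else sl j)
  end.

(* Transitions of the factor oracle of p (states 0..size p, start 0, sl(0) = -1). *)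
Definition oracle (p : seq T) : seq trans := (build p 0 [::] (fun _ => None)).1.

Fixpoint run (tr : seq trans) (q : nat) (w : seq T) : option nat :=
  match w with
  | [::] => Some q
  | c :: w' => match delta tr q c with
               | None => None
               | Some q' => run tr q' w'
               end
  end.

Fixpoint steps (tr : seq trans) (q : nat) (w : seq T) : nat :=
  match w with
  | [::] => 0
  | c :: w' => match delta tr q c with
               | None => 0
               | Some q' => (steps tr q' w').+1
               end
  end.

Definition FO (S : seq T) : seq trans := oracle (rev S).

Definition inFoc (S x : seq T) : bool := run (FO S) 0 (rev x) != None.

(* Longest suffix of a (possibly empty) lying in Foc(S):
   drop k a for the least k such that drop k a \in Foc(S). *)
Definition repFoc (S a : seq T) : seq T :=
  drop (find (fun k => inFoc S (drop k a)) (iota 0 (size a).+1)) a.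

(* k^S_w : the window w_0..w_{m-1} is read as w_{m-1}, w_{m-2}, ... *)
Definition kBOM (S w : seq T) : nat := steps (FO S) 0 (rev w).

Definition fBOM (S w : seq T) : nat :=
  if w == S then size S else (kBOM S w).+1.

Definition gBOM (S w : seq T) : nat :=
  if w == S then 1 else size S - kBOM S w.

End FactorOracle.

(* Main.v *)
Require Import Defs.
From mathcomp Require Import all_boot.
From mathcomp Require Import zify.

Section P.
Variable T : finType.

Lemma delta_cons (s : nat) (c' : T) (t : nat) tr k c :
  delta ((s, c', t) :: tr) k c =
  if (s == k) && (c' == c) then Some t else delta tr k c.
Proof. by rewrite /delta /=; case: ifP. Qed.

Lemma climb_pres f tr sl (k' : option nat) (c' : T) i k c v :
  delta tr k c = Some v -> delta (climb f tr sl k' c' i).1 k c = Some v.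
Proof.
elim: f tr k' => [|f IH] tr k' H //=.
case: k' => [k0|] //=.
case E: (delta tr k0 c') => [t|] //=.
apply: IH; rewrite delta_cons.
case: andP => // [[/eqP e1 /eqP e2]]; subst; by rewrite E in H.
Qed.

Lemma build_pres (ps : seq T) i tr sl j c v :
  j < i -> delta tr j c = Some v -> delta (build ps i tr sl).1 j c = Some v.
Proof.
elim: ps i tr sl => [|d ps IH] i tr sl Hj H //.
rewrite [build _ _ _ _]/build -/build.
apply: IH; first by lia.
apply: (climb_pres i.+1); rewrite delta_cons.
have -> : (i == j) = false by apply/eqP; lia.
done.
Qed.

Lemma build_spine (x0 : T) (ps : seq T) i tr sl n :
  n < size ps -> delta (build ps i tr sl).1 (i + n) (nth x0 ps n) = Some (i + n).+1.
Proof.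
elim: ps i tr sl n => [|d ps IH] i tr sl n // Hn.
rewrite [build _ _ _ _]/build -/build.
case: n Hn => [|n] Hn.
  rewrite addn0 [nth _ _ 0]/=; apply: build_pres; first by lia.
  apply: (climb_pres i.+1); by rewrite delta_cons !eqxx.
rewrite -addSnnS [nth _ _ n.+1]/=. apply: IH; rewrite /= in Hn; lia.
Qed.

Lemma run_oracle (p : seq T) : run (oracle p) 0 p <> None.
Proof.
suff: forall j, j <= size p -> run (oracle p) j (drop j p) <> None.
  by move/(_ 0 (leq0n _)); rewrite drop0.
move=> j Hj.
have -> : j = size p - (size p - j) by lia.
elim: (size p - j) (leq_subr j (size p)) => [|n IH] Hn.
  by rewrite subn0 drop_size.
have Hlt : size p - n.+1 < size p by lia.
have x0 : T by case: p Hlt Hj Hn IH => [|x ?].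
rewrite (drop_nth x0) // [run _ _ (_ :: _)]/=.
have := @build_spine x0 p 0 [::] (fun _ => None) _ Hlt.

rewrite add0n /oracle => ->.
have -> : (size p - n.+1).+1 = size p - n by lia.
apply: IH; lia.
Qed.

Lemma steps_le tr q (w : seq T) : steps tr q w <= size w.
Proof.
elim: w q => [|c w IH] q //=; case: (delta tr q c) => // q'; exact: IH.
Qed.

Lemma steps_run tr q (w : seq T) j :
  j <= size w -> (run tr q (take j w) != None) = (j <= steps tr q w).
Proof.
elim: w q j => [|c w IH] q j //=.
case: j => [|j] Hj //=.
case: (delta tr q c) => // q'; exact: IH.
Qed.

Lemma repFoc_eq (S a : seq T) :
  repFoc S a = drop (size a - kBOM S a) a.
Proof.
rewrite /repFoc; set K := kBOM S a.
have HK : K <= size a by rewrite /K /kBOM -(size_rev a) steps_le.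
have Hp : forall k, k <= size a -> inFoc S (drop k a) = (size a - k <= K).
  move=> k Hk; rewrite /inFoc rev_drop /K /kBOM steps_run // size_rev; lia.
set P := (fun k => inFoc S (drop k a)).
set idx := find P (iota 0 (size a).+1).
suff -> : idx = size a - K by [].
have Hhas : has P (iota 0 (size a).+1).
  apply/hasP; exists (size a); first by rewrite mem_iota; lia.
  by rewrite /P Hp // subnn.
have Hlt : idx < (size a).+1 by rewrite -[X in _ < X](size_iota 0) -has_find.
have := nth_find 0 Hhas; rewrite -/idx nth_iota // add0n /P Hp; last by lia.
move=> H1.
case: (ltnP (size a - K) idx) => H2; last by lia.
have := before_find 0 H2; rewrite nth_iota; last by lia.
by rewrite add0n /P Hp; lia.
Qed.

Lemma kBOM_S (S : seq T) : kBOM S S = size S.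
Proof.
have HK : kBOM S S <= size S by rewrite /kBOM -(size_rev S) steps_le.
have : run (FO S) 0 (take (size (rev S)) (rev S)) != None.
  by rewrite take_size; apply/eqP; apply: run_oracle.
rewrite steps_run // size_rev => H; rewrite /kBOM in HK *; lia.
Qed.

End P.

Theorem lemma21 (T : finType) (S a a' : seq T) :
  size a = size S -> size a' = size S ->
  repFoc S a = repFoc S a' ->
  fBOM S a = fBOM S a' /\ gBOM S a = gBOM S a'.
Proof.
move=> Ha Ha' Hr.
have HK : kBOM S a = kBOM S a'.
  have := congr1 size Hr; rewrite !repFoc_eq !size_drop.
  have h1 : kBOM S a <= size a by rewrite /kBOM -(size_rev a) steps_le.
  have h2 : kBOM S a' <= size a' by rewrite /kBOM -(size_rev a') steps_le.
  lia.
have key : forall b b' : seq T, size b = size S -> size b' = size S ->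
    repFoc S b = repFoc S b' -> b = S -> b' = S.
  move=> b b' Hb Hb' Hr' Eb; subst b.
  move: Hr'; rewrite !repFoc_eq kBOM_S subnn drop0 => Hr'.
  have HK' : kBOM S b' = size S.
    have := congr1 size Hr'.
    have h2 : kBOM S b' <= size b' by rewrite /kBOM -(size_rev b') steps_le.
    rewrite size_drop; lia.
  by rewrite Hr' HK' Hb' subnn drop0.
rewrite /fBOM /gBOM.
case: (eqVneq a S) => Ea; case: (eqVneq a' S) => Ea' //.
- by rewrite (key a a') ?eqxx in Ea'.
- by rewrite (key a' a) ?eqxx in Ea.
- by rewrite HK.
Qed.
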